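(* Let $\mathbf{A}$ be an $n\times n$ skew-symmetric matrix with real entries and let $\mathbf{v}\in\mathbb{R}^n$. Then the polynomial \[\sum_{I\subseteq[n]}\det\bigl((\mathbf{A}+\mathbf{v}\mathbf{v}^T)[I]\bigr)\prod_{i\in I}z_i\in\mathbb{C}[z_1,\dots,z_n]\] is Hurwitz stable.
   Context: $\mathbf{M}[I]$ is the principal submatrix indexed by $I$, with $\det(\mathbf{M}[\emptyset])=1$. Skew-symmetric: $\mathbf{A}_{ij}=-\mathbf{A}_{ji}$, $\mathbf{A}_{ii}=0$. A polynomial $f\in\mathbb{C}[z_1,\dots,z_n]$ is Hurwitz stable if $f(z_1,\dots,z_n)\ne0$ whenever $\mathrm{Re}(z_i)>0$ for all $i$. *)

(* Defs.v *)
From HB Require Import structures.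
From mathcomp Require Import all_boot all_order all_algebra.
From mathcomp Require Import complex.
From mathcomp Require Import mpoly.
Set Implicit Arguments. Unset Strict Implicit. Unset Printing Implicit Defensive.
Import Order.TTheory GRing.Theory Num.Theory.
Local Open Scope ring_scope.

(* Principal submatrix M[I] of a square matrix, rows/columns indexed by the
   elements of I in increasing order; M[set0] is the 0x0 matrix (det = 1). *)
Definition principal_submx (R : Type) (n : nat) (M : 'M[R]_n) (I : {set 'I_n})
  : 'M[R]_#|I| :=
  mxsub (@enum_val _ (mem I)) (@enum_val _ (mem I)) M.

Definition skew_symmetric (R : pzRingType) (n : nat) (A : 'M[R]_n) : Prop :=
  forall i j, A i j = - A j i.

Definition hurwitz_stable (R : rcfType) (n : nat) (p : {mpoly R[i][n]}) : Prop :=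
  forall z : 'I_n -> R[i], (forall i, 0 < Re (z i)) -> p.@[z] != 0.

Definition principal_minor_poly (R : rcfType) (n : nat) (M : 'M[R]_n)
  : {mpoly R[i][n]} :=
  \sum_(I : {set 'I_n}) ((\det (principal_submx M I))%:C)%C%:MP
     * \prod_(i in I) 'X_i.

(* Main.v *)
Require Import Defs.
From HB Require Import structures.
From mathcomp Require Import all_boot all_order all_algebra.
From mathcomp Require Import complex.
From mathcomp Require Import mpoly.
From mathcomp Require Import all_fingroup.
From mathcomp Require Import ring lra.
Set Implicit Arguments. Unset Strict Implicit. Unset Printing Implicit Defensive.
Import Order.TTheory GRing.Theory Num.Theory.
Local Open Scope ring_scope.

Definition NI (T : comRingType) n (N : 'M[T]_n) (J : {set 'I_n}) : 'M[T]_n :=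
  \matrix_(i, j) if i \in J then N i j else (i == j)%:R.

Lemma det_castmx (T : comRingType) n1 n2 (e : n1 = n2) (B : 'M[T]_n1) :
  \det (castmx (e, e) B) = \det B.
Proof. by case: n2 / e; rewrite castmx_id. Qed.

Lemma det_mxsub_perm (T : comRingType) n (s : 'S_n) (B : 'M[T]_n) :
  \det (mxsub s s B) = \det B.
Proof.
have -> : mxsub s s B = perm_mx s *m B *m perm_mx s^-1.
  by rewrite -row_permE -col_permE; apply/matrixP => i j; rewrite !mxE.
rewrite !det_mulmx !det_perm odd_permV mulrC mulrA -expr2 -exprM mulnC exprM sqrrN !expr1n mul1r.
by [].
Qed.

Lemma det_NI (T : comRingType) n (N : 'M[T]_n) (J : {set 'I_n}) :
  \det (NI N J) = \det (principal_submx N J).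
Proof.
have eq : (#|J| + #|~: J| = n)%N by rewrite cardsC card_ord.
pose h (t : 'I_(#|J| + #|~: J|)) : 'I_n :=
  match split t with inl j => @enum_val _ (mem J) j | inr j => @enum_val _ (mem (~: J)) j end.
have hinj : injective h.
  move=> t1 t2; rewrite /h.
  case: splitP => a Ea; case: splitP => b Eb => E.
  - by apply: ord_inj; rewrite Ea Eb (enum_val_inj E).
  - by have := enum_valP a; rewrite E; move: (enum_valP b); rewrite inE => /negPf ->.
  - by have := enum_valP a; rewrite E inE; move: (enum_valP b) => ->.
  - by apply: ord_inj; rewrite Ea Eb (enum_val_inj E).
pose f (i : 'I_n) := h (cast_ord (esym eq) i).
have finj : injective f by move=> i j /hinj /cast_ord_inj.
pose s := perm finj.
rewrite -(det_mxsub_perm s) -(det_castmx (esym eq)).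
set C := castmx _ _.
have hC : forall i j, C i j = NI N J (h i) (h j).
  move=> i j; rewrite castmxE mxE !permE /f.
  by congr (NI N J (h _) (h _)); apply: val_inj.
have hl : forall j, h (lshift _ j) = @enum_val _ (mem J) j.
  by move=> j; rewrite /h (unsplitK (inl _ j)).
have hr : forall j, h (rshift _ j) = @enum_val _ (mem (~: J)) j.
  by move=> j; rewrite /h (unsplitK (inr _ j)).
rewrite -[C]submxK.
have -> : dlsubmx C = 0.
  apply/matrixP => i j; rewrite !mxE hC hl hr !mxE.
  have := enum_valP i; rewrite inE => /negPf ->.
  case: eqP => // E; have := enum_valP i; rewrite E inE enum_valP //.
have -> : drsubmx C = 1%:M.
  apply/matrixP => i j; rewrite !mxE hC !hr !mxE.
  have := enum_valP i; rewrite inE => /negPf ->.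
  by rewrite (inj_eq enum_val_inj).
rewrite det_ublock det1 mulr1; congr (\det _).
apply/matrixP => i j; rewrite !mxE hC !hl !mxE.
by rewrite enum_valP.
Qed.
Lemma key (T : comRingType) n (N : 'M[T]_n) (z : 'I_n -> T) :
  \det (\matrix_(i, j) (z i * N i j + (i == j)%:R)) =
  \sum_(J : {set 'I_n}) \det (principal_submx N J) * \prod_(i in J) z i.
Proof.
under eq_bigr => J _ do rewrite -det_NI.
rewrite /determinant.
transitivity (\sum_(s : 'S_n) \sum_(J : {set 'I_n}) (-1) ^+ s *
   \prod_i (if i \in J then z i * N i (s i) else (i == s i)%:R)).
  apply: eq_bigr => s _; rewrite -big_distrr /= -bigA_distr; congr (_ * _).
  by apply: eq_bigr => i _; rewrite mxE.
rewrite exchange_big /=; apply: eq_bigr => J _.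
rewrite big_distrl /=; apply: eq_bigr => s _.
rewrite -mulrA; congr (_ * _).
rewrite [\prod_(i in J) _]big_mkcond -big_split /=; apply: eq_bigr => i _.
by rewrite !mxE; case: (i \in J); rewrite ?mulr1 // mulrC.
Qed.
Lemma eval_pmp (R : rcfType) (n : nat) (M : 'M[R]_n) (z : 'I_n -> R[i]) :
  (principal_minor_poly M).@[z] =
  \sum_(I : {set 'I_n}) \det (principal_submx (map_mx (real_complex R) M) I) * \prod_(i in I) z i.
Proof.
rewrite /principal_minor_poly rmorph_sum; apply: eq_bigr => I _.
rewrite rmorphM /= mevalC rmorph_prod /=; congr (_ * _).
  by rewrite /principal_submx -map_mxsub det_map_mx.
by apply: eq_bigr => i _; rewrite mevalXU.
Qed.
Lemma L1 (R : rcfType) (p q : R[i]) (r : R) :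
  complex.Re (p * r%:C * q^*)%C = r * (complex.Re p * complex.Re q + complex.Im p * complex.Im q).
Proof. case: p => a b; case: q => c d /=. ring. Qed.

Lemma L2 (R : rcfType) (x w : R[i]) :
  complex.Re (x * (x * w)^*)%C = (complex.Re x ^+ 2 + complex.Im x ^+ 2) * complex.Re w.
Proof. case: x => a b; case: w => c d /=. ring. Qed.

Lemma Re_sum (R : rcfType) n (F : 'I_n -> R[i]) : complex.Re (\sum_i F i) = \sum_i complex.Re (F i).
Proof. by rewrite raddf_sum. Qed.

Lemma quad_nonneg (R : rcfType) n (A : 'M[R]_n) (v : 'cV[R]_n) (a : 'I_n -> R) :
  (forall i j, A i j = - A j i) ->
  0 <= \sum_j \sum_i (A i j + v i 0 * v j 0) * (a i * a j).
Proof.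
move=> skew.
under eq_bigr => j _ do under eq_bigr => i _ do rewrite mulrDl.
under eq_bigr => j _ do rewrite big_split /=.
rewrite big_split /=.
set S := \sum_j \sum_i A i j * _.
have S0 : S = - S.
  rewrite {1}/S exchange_big /= /S -sumrN; apply: eq_bigr => i _.
  rewrite -sumrN; apply: eq_bigr => j _.
  by rewrite skew mulNr [a j * _]mulrC.
have -> : S = 0 by lra.
rewrite add0r.
have -> : \sum_j \sum_i v i 0 * v j 0 * (a i * a j) = (\sum_i v i 0 * a i) ^+ 2.
  rewrite expr2 big_distrl /=; apply: eq_bigr => j _.
  rewrite big_distrr /=; apply: eq_bigr => i _.
  by rewrite mulrACA mulrC.
exact: sqr_ge0.
Qed.

Theorem lemma4p4 (R : rcfType) (n : nat) (A : 'M[R]_n) (v : 'cV[R]_n) :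
  skew_symmetric A ->
  hurwitz_stable (principal_minor_poly (A + v *m v^T)).
Proof.
move=> skew z Hz.
rewrite eval_pmp.
set N := map_mx (real_complex R) (A + v *m v^T).
rewrite -key.
have -> : \matrix_(i, j) (z i * N i j + (i == j)%:R) = \matrix_(i, j) (z i * N i j) + 1%:M.
  by apply/matrixP => i j; rewrite !mxE.
apply/det0P => -[x xn0 xB].
have Ex : forall j, x 0 j = - \sum_i (x 0 i * z i) * N i j.
  move=> j; move/matrixP: xB => /(_ 0 j); rewrite mulmxDr mulmx1 !mxE => /eqP.
  rewrite addrC addr_eq0 => /eqP ->; congr (- _); apply: eq_bigr => i _.
  by rewrite mxE mulrA.
have [j0 Hj0] : exists j, x 0 j != 0.
  case: (pickP (fun j => x 0 j != 0)) => [j0 Hj0|H]; first by exists j0.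
  exfalso; move/eqP: xn0; apply; apply/matrixP => i j; rewrite (ord1 i) mxE.
  by move/negbFE/eqP: (H j).
pose y i := x 0 i * z i.
pose T := \sum_j x 0 j * (y j)^*%C.
have HNij : forall i j, N i j = ((A i j + v i 0 * v j 0)%:C)%C.
  move=> i j; rewrite /N !mxE big_ord1 !mxE; by [].
have T1 : complex.Re T = \sum_j (complex.Re (x 0 j) ^+ 2 + complex.Im (x 0 j) ^+ 2) * complex.Re (z j).
  by rewrite /T Re_sum; apply: eq_bigr => j _; rewrite /y L2.
have T2 : complex.Re T = - \sum_j \sum_i (A i j + v i 0 * v j 0) *
     (complex.Re (y i) * complex.Re (y j) + complex.Im (y i) * complex.Im (y j)).
  rewrite /T (eq_bigr (fun j => - \sum_i y i * N i j * (y j)^*%C)); last first.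
    by move=> j _; rewrite Ex mulNr big_distrl.
  rewrite sumrN raddfN /= Re_sum; congr (- _); apply: eq_bigr => j _.
  rewrite Re_sum; apply: eq_bigr => i _.
  by rewrite HNij L1.
have Q : 0 <= \sum_j \sum_i (A i j + v i 0 * v j 0) *
     (complex.Re (y i) * complex.Re (y j) + complex.Im (y i) * complex.Im (y j)).
  under eq_bigr => j _ do under eq_bigr => i _ do rewrite mulrDr.
  under eq_bigr => j _ do rewrite big_split /=.
  rewrite big_split /=; apply: addr_ge0; exact: quad_nonneg.
have P : 0 < complex.Re T.
  rewrite T1 (bigD1 j0) //=.
  have pos : forall j, 0 < complex.Re (z j).
    by move=> j; have := Hz j; rewrite -complexRe ltcE /= => /andP [_ ->].
  have H0 : 0 <= \sum_(j < n | j != j0) (complex.Re (x 0 j) ^+ 2 + complex.Im (x 0 j) ^+ 2) * complex.Re (z j).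
    apply: sumr_ge0 => j _; apply: mulr_ge0; last exact: ltW.
    by apply: addr_ge0; apply: sqr_ge0.
  have H1 : 0 < complex.Re (x 0 j0) ^+ 2 + complex.Im (x 0 j0) ^+ 2.
    rewrite lt_def paddr_eq0 ?sqr_ge0 // !sqrf_eq0 andbC addr_ge0 ?sqr_ge0 //.
    move: Hj0; case: (x 0 j0) => a b /=; apply: contra => /andP [/eqP -> /eqP ->].
    by [].
  have := mulr_gt0 H1 (pos j0); lra.
move: P; rewrite T2 oppr_gt0 => /lt_le_trans /(_ Q).
by rewrite ltxx.
Qed.
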